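(* Let $\{p^\circ_{(R,\alpha)}\}_{(R,\alpha)}$ be a replacement rule satisfying the Fixation Axiom and representing neutral drift, and fix $u\in(0,1]$. For $\nu\in(0,1)$ let $\pi^{\nu}_{\mathrm{MSS}}$ denote the mutation–selection stationary distribution with mutation probability $u$ and mutational bias $\nu$. Then for every state $\mathbf{x}\in\{0,1\}^G$, $\pi^{\nu}_{\mathrm{MSS}}(\mathbf{x})=\pi^{1-\nu}_{\mathrm{MSS}}(\bar{\mathbf{x}})$, where $\bar x_g=1-x_g$ for all $g\in G$.
   Context: Setting. $G$ is a finite nonempty set of genetic sites; a state is $\mathbf{x}\in\{0,1\}^G$. A replacement event is $(R,\alpha)$ with $R\subseteq G$, $\alpha:R\to G$. A replacement rule representing neutral drift is a single probability distribution $\{p^\circ_{(R,\alpha)}\}$ over events, used in every state. With mutation probability $u\in[0,1]$ and bias $\nu\in(0,1)$, the evolutionary Markov chain moves from $\mathbf{x}$: draw $(R,\alpha)$ with probability $p^\circ_{(R,\alpha)}$; independently for $g\in R$, $x'_g=x_{\alpha(g)}$ w.p. $1-u$, $x'_g=1$ w.p. $u\nu$, $x'_g=0$ w.p. $u(1-\nu)$; $x'_g=x_g$ for $g\notin R$. Fixation Axiom: there exist $g\in G$, $m\ge1$, events $(R_k,\alpha_k)_{k=1}^m$ with $p^\circ_{(R_k,\alpha_k)}>0$, $g\in R_k$ for some $k$, and $\tilde\alpha_1\circ\cdots\circ\tilde\alpha_m(h)=g$ for all $h$, where $\tilde\alpha_k$ equals $\alpha_k$ on $R_k$ and the identity elsewhere.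 For $u>0$ this chain has a unique stationary distribution, the mutation–selection stationary distribution. *)

(* Defs.v *)
From HB Require Import structures.
From mathcomp Require Import all_boot all_order all_algebra.
Set Implicit Arguments. Unset Strict Implicit. Unset Printing Implicit Defensive.
Import Order.TTheory GRing.Theory Num.Theory.
Local Open Scope ring_scope.

(* States: x in {0,1}^G, encoded as boolean functions (true = 1). *)
Definition state (G : finType) := {ffun G -> bool}.

(* A replacement event (R, alpha).  alpha : R -> G is encoded as a total
   function G -> G; a replacement rule only charges events whose encoding is
   canonical (alpha g = g for g outside R), see [canonical_rule]. *)
Definition event (G : finType) := ({set G} * {ffun G -> G})%type.

Definition ev_R (G : finType) (e : event G) : {set G} := e.1.
Definition ev_alpha (G : finType) (e : event G) : G -> G := e.2.

Definition alpha_tilde (G : finType) (e : event G) (h : G) : G :=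
  if h \in ev_R e then ev_alpha e h else h.

(* A replacement rule representing neutral drift: one probability
   distribution over events (used in every state). *)
Definition is_rule (R : realFieldType) (G : finType) (p : event G -> R) :=
  (forall e, 0 <= p e) /\ \sum_(e : event G) p e = 1.

(* Only canonical encodings of events receive positive probability
   (this makes event G with p in bijection with distributions on true events). *)
Definition canonical_rule (R : realFieldType) (G : finType) (p : event G -> R) :=
  forall e, 0 < p e -> forall g, g \notin ev_R e -> ev_alpha e g = g.

Definition comp_tilde (G : finType) (es : seq (event G)) : G -> G :=
  foldr (fun e f => fun h => alpha_tilde e (f h)) id es.

Definition fixation_axiom (R : realFieldType) (G : finType) (p : event G -> R) :=
  exists (g : G) (es : seq (event G)),
    [/\ (0 < size es)%N,
        (forall e, e \in es -> 0 < p e),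
        (exists2 e, e \in es & g \in ev_R e) &
        (forall h, comp_tilde es h = g)].

Definition site_prob (R : realFieldType) (G : finType) (u nu : R)
  (e : event G) (x y : state G) (g : G) : R :=
  if g \in ev_R e then
    (1 - u) * (y g == x (ev_alpha e g))%:R
    + u * nu * (y g)%:R + u * (1 - nu) * (~~ y g)%:R
  else (y g == x g)%:R.

Definition trans (R : realFieldType) (G : finType) (p : event G -> R) (u nu : R)
  (x y : state G) : R :=
  \sum_(e : event G) p e * \prod_(g : G) site_prob u nu e x y g.

Definition stationary (R : realFieldType) (G : finType) (p : event G -> R) (u nu : R)
  (pi : state G -> R) :=
  [/\ forall x, 0 <= pi x,
      \sum_(x : state G) pi x = 1 &
      forall y, \sum_(x : state G) pi x * trans p u nu x y = pi y].

Definition flip (G : finType) (x : state G) : state G := [ffun g => ~~ x g].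

(* Main.v *)
Require Import Defs.
From HB Require Import structures.
From mathcomp Require Import all_boot all_order all_algebra.
From mathcomp Require Import ring lra.
Import Order.TTheory GRing.Theory Num.Theory.
Local Open Scope ring_scope.

Section Kernel.
Variables (R : realFieldType) (S : finType).

Fixpoint kpow (P : S -> S -> R) (n : nat) (x y : S) : R :=
  match n with
  | 0%N => (x == y)%:R
  | n'.+1 => \sum_w kpow P n' x w * P w y
  end.

Lemma kpow_ge0 P n x y : (forall x y, 0 <= P x y) -> 0 <= kpow P n x y.
Proof.
move=> P0; elim: n y => [|n IH] y /=; first by rewrite ler0n.
by apply: sumr_ge0 => w _; rewrite mulr_ge0.
Qed.

Lemma kpow_row P n x : (forall x, \sum_y P x y = 1) -> \sum_y kpow P n x y = 1.
Proof.
move=> P1; elim: n => [|n IH] /=.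
  rewrite (bigD1 x) //= eqxx big1 ?addr0 // => y.
  by rewrite eq_sym => /negbTE ->.
rewrite exchange_big /= -IH; apply: eq_bigr => w _.
by rewrite -mulr_sumr P1 mulr1.
Qed.

Lemma kpow_stat P (mu : S -> R) : (forall y, \sum_x mu x * P x y = mu y) ->
  forall n y, \sum_x mu x * kpow P n x y = mu y.
Proof.
move=> H; elim=> [|n IH] y /=.
  rewrite (bigD1 y) //= eqxx mulr1 big1 ?addr0 // => x /negbTE ->.
  by rewrite mulr0.
under eq_bigr => x _ do rewrite mulr_sumr.
rewrite exchange_big /= -H; apply: eq_bigr => w _.
by rewrite -IH mulr_suml; apply: eq_bigr => x _; rewrite mulrA.
Qed.

Lemma sum_ge_term (f : S -> R) i0 : (forall i, 0 <= f i) -> f i0 <= \sum_i f i.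
Proof. by move=> H; rewrite (bigD1 i0) //= lerDl; apply: sumr_ge0. Qed.

Lemma contraction (Q : S -> S -> R) (z : S) (mu : S -> R) :
  (forall x y, 0 <= Q x y) -> (forall x, \sum_y Q x y = 1) ->
  (forall x, 0 < Q x z) ->
  (forall y, \sum_x mu x * Q x y = mu y) -> \sum_x mu x = 0 ->
  forall x, mu x = 0.
Proof.
move=> Q0 Q1 Qz Hs H0.
have key : forall y, `|mu y| <= \sum_x `|mu x| * Q x y.
  move=> y; rewrite -{1}Hs; apply: le_trans (ler_norm_sum _ _ _) _.
  by apply: ler_sum => x _; rewrite normrM (ger0_norm (Q0 _ _)).
have tot : \sum_y (\sum_x `|mu x| * Q x y - `|mu y|) = 0.
  rewrite sumrB exchange_big /=.
  under eq_bigr => x _ do rewrite -mulr_sumr Q1 mulr1.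
  by rewrite subrr.
have eqz : `|mu z| = \sum_x `|mu x| * Q x z.
  have := sum_ge_term (fun y => \sum_x `|mu x| * Q x y - `|mu y|) z.
  rewrite tot => /(_ _)/Wrap[]; first by move=> y; rewrite subr_ge0.
  by have := key z; lra.
have exneg : forall x1, 0 < mu x1 -> exists x2, mu x2 < 0.
  move=> x1 h1; case: (boolP [exists x2, mu x2 < 0]) => [/existsP //|/existsPn hn].
  have := sum_ge_term mu x1; rewrite H0 => /(_ _)/Wrap[]; last by lra.
  by move=> i; rewrite leNgt hn.
have expos : forall x1, mu x1 < 0 -> exists x2, 0 < mu x2.
  move=> x1 h1; case: (boolP [exists x2, 0 < mu x2]) => [/existsP //|/existsPn hn].
  have := sum_ge_term (fun x => - mu x) x1; rewrite sumrN H0 => /(_ _)/Wrap[]; last by lra.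
  by move=> i; rewrite oppr_ge0 leNgt hn.
have final : forall x1 x2, 0 < mu x1 -> mu x2 < 0 -> False.
  move=> x1 x2 h1 h2.
  have e1 : \sum_x mu x * Q x z = mu z by apply: Hs.
  have d1 := sum_ge_term (fun x => `|mu x| * Q x z - mu x * Q x z) x2.
  have d2 := sum_ge_term (fun x => `|mu x| * Q x z + mu x * Q x z) x1.
  rewrite sumrB in d1; rewrite big_split /= in d2.
  have /d1 {}d1 : forall i, 0 <= `|mu i| * Q i z - mu i * Q i z.
    by move=> i; rewrite -mulrBl mulr_ge0 // ?subr_ge0 ?ler_norm.
  have /d2 {}d2 : forall i, 0 <= `|mu i| * Q i z + mu i * Q i z.
    move=> i; rewrite -mulrDl mulr_ge0 //.
    by rewrite -{2}(opprK (mu i)) subr_ge0 -normrN ler_norm.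
  have t1 : 0 < (`|mu x2| - mu x2) * Q x2 z.
    by rewrite mulr_gt0 // ltr0_norm //; lra.
  have t2 : 0 < (`|mu x1| + mu x1) * Q x1 z.
    by rewrite mulr_gt0 // gtr0_norm //; lra.
  rewrite mulrBl in t1; rewrite mulrDl in t2.
  rewrite e1 -eqz in d1 d2.
  case: (lerP 0 (mu z)) => h.
    by rewrite (ger0_norm h) in d1 d2; lra.
  by rewrite (ltr0_norm h) in d1 d2; lra.
move=> x; apply/eqP/negP => /negP nz.
case: (ltrgtP (mu x) 0) => h //.
  by have [x2 h2] := expos x h; exact: (final x2 x h2 h).
by have [x2 h2] := exneg x h; exact: (final x x2 h h2).
by move: nz; rewrite h eqxx.
Qed.
End Kernel.


Section Chain.
Variables (R : realFieldType) (G : finType) (p : event G -> R) (u nu : R).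

Lemma site_flip (e : event G) (x y : state G) (g : G) :
  site_prob u (1 - nu) e (flip x) (flip y) g = site_prob u nu e x y g.
Proof.
rewrite /site_prob !ffunE; case: ifP => _.
  by case: (y g); case: (x _) => /=; ring.
by case: (y g); case: (x g).
Qed.

Lemma trans_flip (x y : state G) : trans p u (1 - nu) (flip x) (flip y) = trans p u nu x y.
Proof.
by apply: eq_bigr => e _; congr (_ * _); apply: eq_bigr => g _; rewrite site_flip.
Qed.

Lemma flip_inj : injective (@flip G).
Proof.
by move=> x y /ffunP H; apply/ffunP => g; move: (H g); rewrite !ffunE => /negb_inj.
Qed.

Lemma flipK : involutive (@flip G).
Proof. by move=> x; apply/ffunP => g; rewrite !ffunE negbK. Qed.

Hypotheses (hu0 : 0 < u) (hu1 : u <= 1) (hn0 : 0 < nu) (hn1 : nu < 1).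

Lemma site_ge0 (e : event G) (x y : state G) (g : G) : 0 <= site_prob u nu e x y g.
Proof.
rewrite /site_prob; case: ifP => _; last by rewrite ler0n.
rewrite !addr_ge0 // !mulr_ge0 ?ler0n //; have := hu0; have := hu1; have := hn0; have := hn1; lra.
Qed.

Lemma trans_ge0 (x y : state G) : (forall e, 0 <= p e) -> 0 <= trans p u nu x y.
Proof.
move=> p0; apply: sumr_ge0 => e _; rewrite mulr_ge0 //.
by apply: prodr_ge0 => g _; apply: site_ge0.
Qed.

Lemma trans_row (x : state G) : is_rule p -> \sum_y trans p u nu x y = 1.
Proof.
move=> [p0 p1]; rewrite /trans exchange_big /= -[X in _ = X]p1; apply: eq_bigr => e _.
rewrite -mulr_sumr.
pose F := fun g (b : bool) => if g \in ev_R e then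
   (1 - u) * (b == x (ev_alpha e g))%:R + u * nu * b%:R + u * (1 - nu) * (~~ b)%:R
   else (b == x g)%:R.
have -> : \sum_(y : state G) \prod_g site_prob u nu e x y g = \prod_g \sum_b F g b.
  by rewrite bigA_distr_bigA.
rewrite big1 ?mulr1 // => g _; rewrite big_bool /F; case: ifP => _.
  by case: (x _) => /=; ring.
by case: (x g) => /=; rewrite ?addr0 ?add0r.
Qed.

Definition setR (e : event G) (x : state G) : state G :=
  [ffun h => (h \in ev_R e) || x h].

Lemma trans_pos (e : event G) (x : state G) : (forall e, 0 <= p e) -> 0 < p e -> 0 < trans p u nu x (setR e x).
Proof.
move=> p0 pe; rewrite /trans.
have H := sum_ge_term _ _ (fun e' => p e' * \prod_g site_prob u nu e' x (setR e x) g) e.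
apply: lt_le_trans (H _); last first.
  by move=> e'; rewrite mulr_ge0 //; apply: prodr_ge0 => g _; apply: site_ge0.
rewrite mulr_gt0 //; apply: prodr_gt0 => g _.
rewrite /site_prob /setR ffunE; case: ifP => hg /=.
  have : 0 <= (1 - u) * ((true == x (ev_alpha e g)))%:R.
    by rewrite mulr_ge0 ?ler0n //; have := hu1; lra.
  have : 0 < u * nu by rewrite mulr_gt0.
  rewrite hg /=; lra.
by rewrite hg /= eqxx ltr01.
Qed.

End Chain.

Arguments kpow {R S}. Arguments kpow_ge0 {R S}. Arguments kpow_row {R S}.
Arguments kpow_stat {R S}. Arguments sum_ge_term {R S}. Arguments contraction {R S}.
Arguments setR {G}. Arguments trans_pos {R G}. Arguments trans_ge0 {R G}.
Arguments trans_flip {R G}. Arguments flip_inj {G}. Arguments trans_row {R G}.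
Arguments flipK {G}.

Definition run {G : finType} (x : state G) (es : seq (event G)) : state G :=
  foldl (fun x e => setR e x) x es.

Lemma run_spec (G : finType) (x : state G) es h :
  run x es h = x h || has (fun e => h \in ev_R e) es.
Proof.
elim: es x => [|e es IH] x /=; first by rewrite orbF.
rewrite IH /setR ffunE.
by case: (h \in ev_R e); case: (x h); rewrite ?orbT.
Qed.

Lemma comp_id (G : finType) (es : seq (event G)) h :
  (forall e, e \in es -> h \notin ev_R e) -> comp_tilde es h = h.
Proof.
elim: es => [|e es IH] H //=.
rewrite IH; last by move=> e' he'; apply: H; rewrite inE he' orbT.
by rewrite /alpha_tilde (negbTE (H e _)) // inE eqxx.
Qed.

Lemma kpow_run (R : realFieldType) (G : finType) (p : event G -> R) (u nu : R)
  (x : state G) (es : seq (event G)) :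
  0 < u -> u <= 1 -> 0 < nu -> nu < 1 -> (forall e, 0 <= p e) ->
  (forall e, e \in es -> 0 < p e) ->
  0 < kpow (trans p u nu) (size es) x (run x es).
Proof.
move=> hu0 hu1 hn0 hn1 p0; elim/last_ind: es => [|es e IH] H /=.
  by rewrite eqxx ltr01.
rewrite size_rcons /run foldl_rcons -/(run x es) /=.
have Hs := sum_ge_term (fun w => kpow (trans p u nu) (size es) x w *
   trans p u nu w (setR e (run x es))) (run x es).
apply: lt_le_trans (Hs _); last first.
  move=> w; rewrite mulr_ge0 //; first by apply: kpow_ge0 => ? ?; by apply: trans_ge0.
  exact: trans_ge0.
rewrite mulr_gt0 //.
  by apply: IH => e' he'; apply: H; rewrite mem_rcons inE he' orbT.
by apply: trans_pos => //; apply: H; rewrite mem_rcons inE eqxx.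
Qed.

Theorem proposition3 (R : realFieldType) (G : finType) (p : event G -> R)
  (u nu : R) (pi1 pi2 : state G -> R) :
  (0 < #|G|)%N ->
  is_rule p -> canonical_rule p -> fixation_axiom p ->
  0 < u -> u <= 1 -> 0 < nu -> nu < 1 ->
  stationary p u nu pi1 -> stationary p u (1 - nu) pi2 ->
  forall x : state G, pi1 x = pi2 (flip x).
Proof.
move=> _ hr _ [g [es [hsz hpos [k hk gk] hcomp]]] hu0 hu1 hn0 hn1
  [s1a s1b s1c] [s2a s2b s2c] x.
have p0 := proj1 hr.
have st2 : forall y, \sum_x0 pi2 (flip x0) * trans p u nu x0 y = pi2 (flip y).
  move=> y; rewrite -s2c [RHS](reindex_inj flip_inj) /=.
  by apply: eq_bigr => x' _; rewrite trans_flip.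
have sum2 : \sum_x0 pi2 (flip x0) = 1.
  by rewrite -s2b [RHS](reindex_inj flip_inj).
pose mu := fun y => pi1 y - pi2 (flip y).
have stmu : forall y, \sum_x0 mu x0 * trans p u nu x0 y = mu y.
  move=> y; rewrite /mu; under eq_bigr => x0 _ do rewrite mulrBl.
  by rewrite sumrB s1c st2.
have summu : \sum_x0 mu x0 = 0 by rewrite /mu sumrB s1b sum2 subrr.
have runE : forall x0, run x0 es = [ffun=> true].
  move=> x0; apply/ffunP => h; rewrite run_spec ffunE.
  apply/orP; right; apply/negPn/negP => /hasPn hn.
  have := hcomp h; rewrite comp_id // => hg; subst h.
  by move: (hn k hk); rewrite gk.
have H : mu x = 0.
  apply: (contraction (kpow (trans p u nu) (size es)) [ffun=> true] mu _ _ _ _ summu).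
  - by move=> ? ?; apply: kpow_ge0 => ? ?; apply: trans_ge0.
  - by move=> ?; apply: kpow_row => ?; apply: trans_row.
  - by move=> x0; rewrite -(runE x0); apply: kpow_run.
  - exact: kpow_stat.
by move/eqP: H; rewrite /mu subr_eq0 => /eqP.
Qed.
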